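(* Let $\Phi_{usc}=\{(X,f):\,X\subseteq\mathbb{R}^d\text{ closed},\ f:X\rightarrow\overline{\mathbb{R}}\text{ upper semi-continuous}\}$, topologized via the bijection $\tau:(X,f)\mapsto\{(x,t)\in X\times\overline{\mathbb{R}}:\,t\leq f(x)\}$ onto the family $\mathcal{U}_{cl}$ of closed sets $A\subseteq\mathbb{R}^d\times\overline{\mathbb{R}}$ satisfying: for all $x\in\mathbb{R}^d$ and $t\in\overline{\mathbb{R}}$, $(x,t)\in A$ implies $\{x\}\times[-\infty,t]\subseteq A$. Then $\Phi_{usc}$ is compact in the topology induced by $\mathcal{U}_{cl}$.
   Context: $\overline{\mathbb{R}}=[-\infty,\infty]$ is the extended real line. $\mathcal{U}_{cl}$ carries the topology it inherits as a subspace of the space $\mathcal{F}(\mathbb{R}^d\times\overline{\mathbb{R}})$ of all closed subsets of $\mathbb{R}^d\times\overline{\mathbb{R}}$ equipped with the Fell (hit-or-miss) topology; $\Phi_{usc}$ carries the topology making $\tau$ a homeomorphism. *)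

(* Defs.v *)
From HB Require Import structures.
From mathcomp Require Import all_boot all_order all_algebra.
From mathcomp Require Import all_classical all_reals all_analysis.
Set Implicit Arguments. Unset Strict Implicit. Unset Printing Implicit Defensive.
Import Order.TTheory GRing.Theory Num.Theory numFieldNormedType.Exports.
Local Open Scope classical_set_scope.
Local Open Scope ring_scope.

(** The space F(T) of (closed) subsets of a topological space T with the
    Fell (hit-or-miss) topology, generated by the subbase
      F^K = {F | F ∩ K = ∅}  (K compact)   and   F_G = {F | F ∩ G ≠ ∅} (G open).
    We put this topology on the type of all subsets of T; the space F(T) of
    closed sets, and U_cl, carry the subspace topology, and compactness of a
    subset is the same whether computed in F(T) or in this ambient space. *)
Definition fell_space (T : Type) : Type := set T.

Section Fell.
Variable T : topologicalType.

Definition fell_subbase : set (set (set T)) :=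
  [set M | (exists K : set T, compact K /\ M = [set F | F `&` K = set0])
        \/ (exists G : set T, open G /\ M = [set F | F `&` G !=set0])].

HB.instance Definition _ := Choice.on (fell_space T).
HB.instance Definition _ :=
  @isSubBaseTopological.Build (fell_space T) (set (set T)) fell_subbase id.
End Fell.

Notation Ecyl R d := ('rV[R]_d * \bar R)%type.

(** upper semicontinuity of f : X -> \bar R (f given on the whole space,
    only its values on X matter) *)
Definition usc_on (R : realType) (d : nat) (X : set 'rV[R]_d)
  (f : 'rV[R]_d -> \bar R) : Prop :=
  forall x, X x -> forall t : \bar R, (f x < t)%E ->
    \forall y \near x, X y -> (f y < t)%E.

Definition Phi_usc (R : realType) (d : nat) :
  set (set 'rV[R]_d * ('rV[R]_d -> \bar R)) :=
  [set p | closed p.1 /\ usc_on p.1 p.2].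

Definition tau (R : realType) (d : nat)
  (p : set 'rV[R]_d * ('rV[R]_d -> \bar R)) : fell_space (Ecyl R d) :=
  [set z : Ecyl R d | p.1 z.1 /\ (z.2 <= p.2 z.1)%E].

Definition U_cl (R : realType) (d : nat) : set (fell_space (Ecyl R d)) :=
  [set A | closed (A : set (Ecyl R d)) /\
     forall (x : 'rV[R]_d) (t s : \bar R), A (x, t) -> (s <= t)%E -> A (x, s)].

(* Main.v *)
Require Import Defs.
From HB Require Import structures.
From mathcomp Require Import all_boot all_order all_algebra.
From mathcomp Require Import all_classical all_reals all_analysis.
Import Order.TTheory GRing.Theory Num.Theory numFieldNormedType.Exports.
Local Open Scope classical_set_scope.
Local Open Scope ring_scope.
Set Implicit Arguments. Unset Strict Implicit.

Lemma fell_cvg (T : topologicalType) (F : set_system (fell_space T)) (A : fell_space T) :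
  Filter F -> (forall M, fell_subbase M -> M A -> F M) -> F --> A.
Proof.
move=> FF H P /=.
rewrite nbhsE => -[B [oB BA sBP]].
apply: (@filterS _ F _ B) => //.
case: oB => D' sD' eB.
move: BA; rewrite -eB => -[M DM MA]; have [E sE eM] := sD' M DM.
apply: (@filterS _ F _ M); first by move=> z Mz; exists M.
rewrite -eM; apply: filter_bigI => i iE.
apply: H; first exact: set_mem (sE i iE).
by move: MA; rewrite -eM; apply.
Qed.

Lemma ereal_below (R : realType) (a : \bar R) (V : set (\bar R)) :
  nbhs a V -> a != -oo%E -> exists s, (s < a)%E /\ V s.
Proof.
case: a => [r| |] // Vr _.
- move/nbhs_EFin: Vr => Vr.
  have : \forall y \near r^'-, V y%:E /\ y < r.
    near=> y; split; last by near: y; exact: nbhs_left_lt.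
    near: y; exact: cvg_within.
  move=> H; have [y [Vy yr]] := @filter_ex _ _ (at_left_proper_filter r) _ H.
  by exists y%:E; split => //; rewrite lte_fin.
- move/nbhs_ereal_pinfty: Vr => [_ Vr].
  have [y Vy] := filter_ex Vr.
  by exists y%:E; split => //; rewrite ltry.
Unshelve. all: end_near.
Qed.

Lemma prod_nb (R : realType) d (x : 'rV[R]_d) (t : \bar R) (W : set (Ecyl R d)) :
  nbhs (x, t) W -> exists B V, [/\ nbhs x B, nbhs t V & forall y s, B y -> V s -> W (y, s)].
Proof.
case=> [[B V]] /= [Bx Vt] sub.
by exists B, V; split => // y s By Vs; apply: (sub (y, s)).
Qed.

Section Main.
Variables (R : realType) (d : nat).
Let T := Ecyl R d.
Let S : set (fell_space T) := tau (d:=d) @` Phi_usc (R:=R) (d:=d).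

Lemma S_down (F : fell_space T) x t s : S F -> F (x, t) -> (s <= t)%E -> F (x, s).
Proof.
move=> [p _ <-] [/= Xx tf] st; split => //=; exact: le_trans tf.
Qed.

Variable U : set_system (fell_space T).
Hypothesis UU : UltraFilter U.
Hypothesis US : U S.

Let hit (G : set T) : set (fell_space T) := [set F | F `&` G !=set0].

Let Alim : set T := [set z | forall G, nbhs z G -> U (hit G)].

Lemma Alim_closed : closed Alim.
Proof.
move=> z zc G.
rewrite nbhsE.
move=> -[Ob [oO Oz] sOG].
have [z' [Az' Oz']] := zc Ob (open_nbhs_nbhs (conj oO Oz)).
apply: filterS (Az' Ob (open_nbhs_nbhs (conj oO Oz'))).
by move=> F [w [Fw Ow]]; exists w; split => //; apply: sOG.
Qed.

Lemma Alim_down x t s : Alim (x, t) -> (s <= t)%E -> Alim (x, s).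
Proof.
move=> Axt; rewrite le_eqVlt => /orP[/eqP -> //|st] G /prod_nb [B [V [Bx Vs BVG]]].
pose G' : set T := [set z | B z.1 /\ (s < z.2)%E].
have nG' : nbhs (x, t) G'.
  exists (B, [set r | (s < r)%E]) => /=; first split => //.
    exact: open_ereal_gt'.
  by move=> [y r] [].
apply: filterS (filterI (Axt G' nG') US).
move=> F [[[y r] [Fyr [By sr]]] SF]; exists (y, s); split.
  by apply: S_down Fyr (ltW sr).
by apply: BVG => //; apply: nbhs_singleton.
Qed.

Lemma U_cvg : U --> (Alim : fell_space T).
Proof.
have UF : Filter U by case: UU => -[].
apply: fell_cvg => M [[K [cK ->]]|[G [oG ->]]] MA.
- move/compact_near_coveringP: cK => /(_ (fell_space T) U (fun F z => ~ F z) UF) H.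
  have UK : U [set F : fell_space T | K `<=` (fun z => ~ F z)].
    apply: H => z Kz.
    have nAz : ~ Alim z.
      move=> Az; have : (Alim `&` K) z by split.
      by rewrite (MA : Alim `&` K = set0).
    have [G [nG nUG]] : exists G, nbhs z G /\ ~ U (hit G).
      apply: contrapT => H'; apply: nAz => G nG; apply: contrapT => nU.
      by apply: H'; exists G.
    have [//|UC] := in_ultra_setVsetC (hit G) UU.
    exists (G, ~` hit G) => //= -[z' F'] [/= Gz' nhF] Fz'.
    by apply: nhF; exists z'.
  apply: filterS UK => F HF.
  by apply/eqP/negPn/negP => /set0P [w [Fw Kw]]; exact: (HF w Kw Fw).
- case: MA => z [Az Gz]; exact: Az G (open_nbhs_nbhs (conj oG Gz)).
Qed.

Let X : set 'rV[R]_d := [set x | Alim (x, -oo%E)].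
Let f (x : 'rV[R]_d) : \bar R := ereal_sup [set t | Alim (x, t)].

Lemma Alim_top x : X x -> Alim (x, f x).
Proof.
move=> Xx; have [fe|fn] := eqVneq (f x) -oo%E; first by rewrite fe.
apply: Alim_closed => W /prod_nb [B [V [Bx Vf BVW]]].
have [s [sf Vs]] := ereal_below Vf fn.
have [y Sy sy] := ereal_sup_gt sf.
exists (x, s); split; first exact: Alim_down Sy (ltW sy).
apply: BVW => //; exact: nbhs_singleton.
Qed.

Lemma tauA : tau (X, f) = Alim.
Proof.
apply/seteqP; split => -[x t] /=.
- case=> /= Xx tf; exact: Alim_down (Alim_top Xx) tf.
- move=> A; split => /=; first exact: Alim_down A (leNye t).
  by apply: ereal_sup_ubound.
Qed.

Lemma X_closed : closed X.
Proof.
move=> x xc; apply: Alim_closed => W /prod_nb [B [V [Bx Vt BVW]]].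
have [y [Xy By]] := xc B Bx.
exists (y, -oo%E); split => //; apply: BVW => //; exact: nbhs_singleton.
Qed.

Lemma f_usc : usc_on X f.
Proof.
move=> x Xx t ft.
have nA : ~ Alim (x, t).
  move=> A; have : (t <= f x)%E by apply: ereal_sup_ubound.
  by rewrite leNgt ft.
have : nbhs (x, t) (~` Alim).
  apply: open_nbhs_nbhs; split => //; exact: closed_openC Alim_closed.
move=> /prod_nb [B [V [Bx Vt BVW]]].
apply: filterS Bx => y By Xy; rewrite ltNge; apply/negP => tfy.
apply: (BVW y t By (nbhs_singleton Vt)); exact: Alim_down (Alim_top Xy) tfy.
Qed.

Lemma exists_lim : S `&` [set p | U --> p] !=set0.
Proof.
exists (Alim : fell_space T); split; last exact: U_cvg.
exists (X, f); last exact: tauA.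
split; [exact: X_closed | exact: f_usc].
Qed.
End Main.

Unset Implicit Arguments.
Local Close Scope ring_scope.
Theorem proposition2p1 (R : realType) (d : nat) :
  @compact (fell_space (Ecyl R d)) (tau (d:=d) @` Phi_usc (R:=R) (d:=d)).
Proof.
rewrite compact_ultra => U UU US; exact: exists_lim.
Qed.
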